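(* For every integer $\alpha\ge2$ and every integer $k>3$, $$2k^2-2k\le N_\alpha(k,k)\le (k^3-k^2+k)\binom{k}{2}.$$
   Context: A $k$-power is a word $u^k$ ($k$ concatenated copies of $u$) for a nonempty word $u$. A $k$-anti-power is a word $w=w_1\cdots w_k$ with $|w_1|=\cdots=|w_k|$ and $w_1,\dots,w_k$ pairwise distinct. $N_\alpha(k,k)$ is the smallest positive integer $N$ such that every word of length $N$ over an alphabet of size $\alpha$ contains a factor (contiguous subword) that is a $k$-power or a $k$-anti-power. *)

(* Defs.v *)
From mathcomp Require Import all_boot.
Set Implicit Arguments. Unset Strict Implicit. Unset Printing Implicit Defensive.

Definition is_kpower (T : eqType) (k : nat) (w : seq T) : Prop :=
  exists u : seq T, u != [::] /\ w = flatten (nseq k u).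

Definition is_kantipower (T : eqType) (k : nat) (w : seq T) : Prop :=
  exists ws : seq (seq T),
    [/\ size ws = k, w = flatten ws,
        (exists m, forall b, b \in ws -> size b = m) & uniq ws].

Definition forces_power_or_antipower (alpha k N : nat) : Prop :=
  forall w : seq 'I_alpha, size w = N ->
    exists f : seq 'I_alpha, infix f w /\ (is_kpower k f \/ is_kantipower k f).

Definition is_N_alpha_kk (alpha k N : nat) : Prop :=
  0 < N /\ forces_power_or_antipower alpha k N /\
  (forall M, 0 < M -> M < N -> ~ forces_power_or_antipower alpha k M).

(* Main.v *)
Require Import Defs.
From mathcomp Require Import all_boot.
From mathcomp Require Import zify.
From Stdlib Require Import Classical.
Set Implicit Arguments. Unset Strict Implicit. Unset Printing Implicit Defensive.


Lemma size_flatten_nseq (T : eqType) (u : seq T) k : size (flatten (nseq k u)) = k * size u.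
Proof. elim: k => //= k IH; rewrite size_cat IH mulSn. by []. Qed.

Lemma nth_flatten_nseq (T : eqType) (x0 : T) (u : seq T) k i : i < k * size u ->
  nth x0 (flatten (nseq k u)) i = nth x0 u (i %% size u).
Proof.
elim: k i => [|k IH] i; first by rewrite mul0n.
rewrite /= nth_cat mulSn => Hi.
case: ltnP => Hu; first by rewrite modn_small.
rewrite IH; last by rewrite -(ltn_add2l (size u)) subnKC.
by rewrite -{2}(subnK Hu) modnDr.
Qed.

Lemma nth_flatten_blocks (T : eqType) (x0 : T) (ws : seq (seq T)) m :
  (forall b, b \in ws -> size b = m) -> forall t i, t < size ws -> i < m ->
  nth x0 (flatten ws) (t * m + i) = nth x0 (nth [::] ws t) i.
Proof.
elim: ws => [|b ws IH] Hs t i //= Ht Hi.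
have Hb : size b = m by apply: Hs; rewrite inE eqxx.
rewrite nth_cat Hb. case: t Ht => [|t] Ht /=; first by rewrite mul0n add0n Hi.
rewrite mulSn -addnA ltnNge leq_addr /= addKn. apply: IH => //.
by move=> b' Hb'; apply: Hs; rewrite inE Hb' orbT.
Qed.

Lemma size_flatten_blocks (T : eqType) (ws : seq (seq T)) m :
  (forall b, b \in ws -> size b = m) -> size (flatten ws) = size ws * m.
Proof.
elim: ws => [|b ws IH] Hs //=. rewrite size_cat IH ?Hs ?inE ?eqxx //.
by move=> b' Hb'; apply: Hs; rewrite inE Hb' orbT.
Qed.

Lemma infix_take_drop (T : eqType) (w : seq T) a l : infix (take l (drop a w)) w.
Proof.
apply/infixP; exists (take a w), (drop l (drop a w)).
by rewrite cat_take_drop cat_take_drop.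
Qed.

Lemma infix_pos (T : eqType) (x0 : T) (f w : seq T) : infix f w ->
  exists a, a + size f <= size w /\ forall i, i < size f -> nth x0 f i = nth x0 w (a + i).
Proof.
move/infixP=> [s [s' ->]]. exists (size s); split.
  by rewrite !size_cat addnA leq_addr.
by move=> i Hi; rewrite nth_cat ltnNge leq_addr /= addKn nth_cat Hi.
Qed.

Lemma periodic_power (T : eqType) (x0 : T) (w : seq T) a p k : 0 < p -> 0 < k -> a + k * p <= size w ->
  (forall i, i + p < k * p -> nth x0 w (a + i) = nth x0 w (a + i + p)) ->
  take (k * p) (drop a w) = flatten (nseq k (take p (drop a w))).
Proof.
move=> Hp Hk Hs Hper.
have Hkp : p <= k * p by rewrite leq_pmull.
have Htp : size (take p (drop a w)) = p.
  rewrite size_take size_drop; case: ltnP => // H; apply/eqP; rewrite eqn_leq H /=.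
  by rewrite leq_subRL ?(leq_trans _ Hs) ?leq_add2l ?leq_addr //; lia.
have Hmod : forall i, i < k * p -> nth x0 w (a + i) = nth x0 w (a + i %% p).
  elim/ltn_ind => i IH Hi. case: (ltnP i p) => Hip; first by rewrite modn_small.
  have E : i = (i - p) + p by rewrite subnK.
  rewrite E modnDr addnA -Hper; last by lia.
  apply: IH; lia.
apply: (@eq_from_nth _ x0).
  rewrite size_take size_drop size_flatten_nseq Htp.
  case: ltnP => // H; apply/eqP; rewrite eqn_leq H /=; lia.
move=> i; rewrite size_take_min size_drop => Hi.
have Hi' : i < k * p by lia.
rewrite nth_take // nth_drop nth_flatten_nseq Htp // nth_take ?ltn_pmod // nth_drop.
exact: Hmod.
Qed.

Lemma pair_set_eq k (i j i' j' : 'I_k) : i < j -> i' < j' ->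
  [set i; j] = [set i'; j'] -> i = i' /\ j = j'.
Proof.
move=> Hij Hij' E.
have Hi : i \in [set i'; j'] by rewrite -E !inE eqxx.
have Hj : j \in [set i'; j'] by rewrite -E !inE eqxx orbT.
have Hi' : i' \in [set i; j] by rewrite E !inE eqxx.
move: Hi Hj Hi'; rewrite !inE.
case/orP=> /eqP Ei; case/orP=> /eqP Ej; case/orP=> /eqP Ei'; subst; split => //;
 move: Hij Hij'; rewrite ?ltnn //; lia.
Qed.


Lemma blk_nth (T : eqType) (x0 : T) (w : seq T) m t e : e < m ->
  nth x0 (take m (drop (t * m) w)) e = nth x0 w (t * m + e).
Proof. by move=> He; rewrite nth_take // nth_drop. Qed.

Lemma upper_gen (T : eqType) k (w : seq T) : 3 < k -> size w = (k ^ 3 - k ^ 2 + k) * 'C(k, 2) ->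
  exists f, infix f w /\ (is_kpower k f \/ is_kantipower k f).
Proof.
move=> Hk Hw.
set T2 := 'C(k, 2).
set A := (k ^ 2 - k) * T2.
have HT2 : 0 < T2 by rewrite bin_gt0; lia.
have HU : k * (A + T2) = (k ^ 3 - k ^ 2 + k) * T2.
  rewrite /A -{2}(mul1n T2) -mulnDl mulnA; congr (_ * _).
  have -> : k ^ 3 = k * k ^ 2 by rewrite expnS.
  have H2 : k <= k ^ 2 by rewrite expnS leq_pmulr //; lia.
  rewrite mulnDr mulnBr muln1; have H3 : k * k <= k * k ^ 2 by rewrite leq_mul2l H2 orbT.
  rewrite -expnS in H3 *. rewrite (expnS k 1) expn1. lia.
have HkU : forall m, m <= A + T2 -> k * m <= size w.
  by move=> m Hm; rewrite Hw -HU leq_mul2l Hm orbT.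
have [x0 _] : exists x0 : T, True.
  by case: w Hw HkU => [|x w'] //= Hw; exfalso; move: Hw; rewrite -HU; lia.
apply: NNPP => Hno.
pose blk m t := take m (drop (t * m) w).
pose ws m := map (blk m) (iota 0 k).
have Hsz : forall m t, m <= A + T2 -> t < k -> size (blk m t) = m.
  move=> m t Hm Ht; rewrite /blk size_takel // size_drop.
  have := HkU m Hm. have : t.+1 * m <= k * m by rewrite leq_mul2r Ht orbT.
  rewrite mulSn; lia.
have Hwsz : forall m, m <= A + T2 -> forall b, b \in ws m -> size b = m.
  by move=> m Hm b /mapP [t]; rewrite mem_iota add0n => /andP [_ Ht] ->; apply: Hsz.
have Hflat : forall m, m <= A + T2 -> flatten (ws m) = take (k * m) w.
  move=> m Hm; apply: (@eq_from_nth _ x0).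
    rewrite (size_flatten_blocks (Hwsz m Hm)) size_map size_iota size_takel ?HkU //.
    all: try by rewrite mulnC.
  move=> i; rewrite (size_flatten_blocks (Hwsz m Hm)) size_map size_iota => Hi.
  have Hm0 : 0 < m by case: m Hm Hi {Hwsz Hsz} => //; rewrite muln0.
  rewrite (divn_eq i m) nth_flatten_blocks ?size_map ?size_iota ?ltn_pmod //; last 2 first.
  - by move=> b Hb; apply: Hwsz.
  - by rewrite ltn_divLR.
  rewrite (nth_map 0) ?size_iota ?ltn_divLR // nth_iota ?ltn_divLR // add0n.
  rewrite blk_nth ?ltn_pmod // nth_take //.
  by rewrite -divn_eq.
have Hnu : forall m, m <= A + T2 -> ~~ uniq (ws m).
  move=> m Hm; apply/negP => Hu; apply: Hno; exists (flatten (ws m)); split.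
    by rewrite Hflat //; have := infix_take_drop w 0 (k * m); rewrite drop0.
  right; exists (ws m); split => //; first by rewrite size_map size_iota.
  by exists m; apply: Hwsz.
pose pr m := [pick ij : 'I_k * 'I_k | (ij.1 < ij.2) && (blk m ij.1 == blk m ij.2)].
have prS : forall m, m <= A + T2 -> exists i j : 'I_k,
    [/\ i < j, blk m i = blk m j & pr m = Some (i, j)].
  move=> m Hm; rewrite /pr; case: pickP => [[i j] /= /andP [Hij /eqP E] | H].
    by exists i, j.
  exfalso; have /(uniqPn [::]) [i [j [Hij Hj E]]] := Hnu m Hm.
  rewrite size_map size_iota in Hj.
  have Hi : i < k by apply: ltn_trans Hj.
  have := H (Ordinal Hi, Ordinal Hj); rewrite /= Hij /=.
  by rewrite !(nth_map 0) ?size_iota // !nth_iota // !add0n in E; rewrite E eqxx.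
pose F (x : 'I_T2.+1) : {set 'I_k} :=
  if pr (A + x) is Some ij then [set ij.1; ij.2] else set0.
have HA : forall x : 'I_T2.+1, A + x <= A + T2.
  by move=> x; rewrite leq_add2l -ltnS.
have : ~~ injectiveb F.
  apply/negP => /injectiveP Hinj.
  have H1 : #|F @: setT| = T2.+1 by rewrite card_imset // cardsT card_ord.
  have H2 : F @: setT \subset [set B : {set 'I_k} | #|B| == 2].
    apply/subsetP => B /imsetP [x _ ->]; rewrite inE /F.
    have [i [j [Hij _ ->]]] := prS _ (HA x).
    have Hn : i != j by apply/eqP => E; move: Hij; rewrite E ltnn.
    by rewrite /= cards2 Hn.
  have := subset_leq_card H2; rewrite card_draws card_ord H1 -/T2; lia.
move/injectivePn => [x1 [y1 Hxy EF]].
have Hmain : forall x y : 'I_T2.+1, x < y -> F x = F y -> False.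
  move=> x y Hlt E.
  have [i [j [Hij Eb Ep]]] := prS _ (HA x).
  have [i' [j' [Hij' Eb' Ep']]] := prS _ (HA y).
  move: E; rewrite /F Ep Ep' /= => /(pair_set_eq Hij Hij') [Ei Ej]; subst i' j'.
  set m := A + x in Eb; set m' := A + y in Eb'.
  set dl := y - x.
  set d := j - i.
  set p := d * dl.
  set a := i * m'.
  have Hy : y <= T2 by rewrite -ltnS.
  have Hdl : dl <= T2 by rewrite /dl; lia.
  have Hdl0 : 0 < dl by rewrite /dl; lia.
  have Hjk : j < k := ltn_ord j.
  have Hd0 : 0 < d by rewrite /d; lia.
  have Hkey : (i + k * d) * dl <= A.
    rewrite /A; apply: leq_mul => //.
    have : i + k * d <= k * (i + d) by rewrite mulnDr leq_add2r leq_pmull; lia.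
    have : k * (i + d) <= k * (k - 1) by rewrite leq_mul2l; apply/orP; right; rewrite /d; lia.
    have -> : k ^ 2 = k * k by rewrite expnS expn1.
    rewrite mulnBr muln1 => ??; lia.
  have Hm : A <= m by rewrite leq_addr.
  have Em' : m' = m + dl by rewrite /m' /m /dl; lia.
  have Hm'T : m' <= A + T2 by apply: HA.
  have Hbm : forall e, e < m -> nth x0 w (i * m + e) = nth x0 w (j * m + e).
    by move=> e He; rewrite -!blk_nth // -/(blk m i) Eb.
  have Hbm' : forall e, e < m' -> nth x0 w (i * m' + e) = nth x0 w (j * m' + e).
    by move=> e He; rewrite -!blk_nth // -/(blk m' i) Eb'.
  have Hjm : (j + 1) * m' <= size w.
    apply: leq_trans (HkU _ Hm'T); rewrite leq_mul2r; apply/orP; right; lia.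
  have Hp0 : 0 < p by rewrite /p muln_gt0 Hd0 Hdl0.
  have Hak : a + k * p <= size w.
    apply: leq_trans Hjm.
    have E1 : a + k * p = i * m + (i + k * d) * dl.
      rewrite /a /p Em' mulnDr mulnDl mulnA (mulnC k d) -mulnA; lia.
    rewrite E1 [(j + 1) * _]mulnDl mul1n.
    have : i * m <= j * m' by apply: leq_mul; [lia | rewrite Em' leq_addr].
    have : m <= m' by rewrite Em' leq_addr.
    lia.
  apply: Hno; exists (take (k * p) (drop a w)); split; first exact: infix_take_drop.
  left; exists (take p (drop a w)); split.
    apply/eqP => E; move: (congr1 size E); rewrite size_takel //= ?size_drop; first lia.
    have : p <= k * p by rewrite leq_pmull; lia.
    lia.
  apply: (@periodic_power _ x0 w a p k) => //; first lia.
  move=> e He.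
  have Ej : j * dl = i * dl + p by rewrite /p /d -mulnDl; congr (_ * _); lia.
  have Ekp : k * p = (k * d) * dl by rewrite /p mulnA.
  have Hlt2 : e + j * dl < m.
    have : (i + k * d) * dl = i * dl + (k * d) * dl by rewrite mulnDl.
    lia.
  have Ea : a = i * m + i * dl by rewrite /a Em' mulnDr.
  have Ejm : j * m' = j * m + j * dl by rewrite Em' mulnDr.
  have -> : nth x0 w (a + e) = nth x0 w (j * m' + e) by apply: Hbm'; lia.
  have -> : a + e + p = i * m + (j * dl + e) by lia.
  rewrite Hbm; last by lia.
  congr (nth _ _ _); lia.
case: (ltngtP x1 y1) => H.
- exact: (Hmain x1 y1 H EF).
- exact: (Hmain y1 x1 H (esym EF)).
- by move: Hxy; rewrite (val_inj H) eqxx.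
Qed.


Definition cc k := (k - 1) * k - 1.
Definition zb k y := (y %% k == 0).
Definition wb k x := if x < cc k then zb k x else if x == cc k then true else zb k (x + 2).

Lemma zbE k y : zb k y = (k %| y). Proof. by []. Qed.

Lemma zb_addl k y r : k %| y -> zb k (y + r) = zb k r.
Proof. by move=> H; rewrite !zbE dvdn_addr. Qed.

Lemma zb_mul k q r : zb k (q * k + r) = zb k r.
Proof. by apply: zb_addl; apply: dvdn_mull. Qed.

Lemma zb_small k r : 0 < r < k -> zb k r = false.
Proof. move=> /andP [H1 H2]; rewrite zbE; apply/negP => /(dvdn_leq H1); lia. Qed.

Lemma zb_cong k y y' i : y %% k = y' %% k -> zb k (y + i) = zb k (y' + i).
Proof. by move=> E; rewrite /zb -modnDml E modnDml. Qed.

Lemma dvd_gap k u v : 0 < k -> k %| u -> k %| v -> u < v -> u + k <= v.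
Proof.
move=> Hk Hu Hv Huv.
have H : k %| v - u by rewrite dvdn_sub.
have := dvdn_leq _ H; rewrite subn_gt0 => /(_ Huv); lia.
Qed.

Lemma next_mult k x : 0 < k -> exists d, d < k /\ k %| x + d.
Proof.
move=> Hk; case E: (x %% k) => [|r].
  by exists 0; split => //; rewrite addn0 /dvdn E.
exists (k - r.+1); split; first lia.
apply/dvdnP; exists (x %/ k).+1; rewrite mulSn.
have := divn_eq x k; have := ltn_pmod x Hk; lia.
Qed.

Lemma cc1 k : 1 < k -> cc k + 1 = (k - 1) * k.
Proof. move=> Hk; rewrite /cc subnK //; rewrite muln_gt0; lia. Qed.

Lemma wb_left k x : x < cc k -> wb k x = zb k x.
Proof. by rewrite /wb => ->. Qed.

Lemma wb_right k x : cc k < x -> wb k x = zb k (x + 2).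
Proof. by rewrite /wb => H; rewrite ltnNge ltnW //= gtn_eqF. Qed.

Lemma wb_c k : wb k (cc k) = true.
Proof. by rewrite /wb ltnn eqxx. Qed.

Lemma W3 k x : 3 < k -> x + k <= 2 * cc k + 1 -> exists y, x <= y < x + k /\ wb k y.
Proof.
move=> Hk Hx.
have Hc := cc1 (ltnW (ltnW Hk)).
case: (ltnP (cc k) x) => Hcx.
  have [d [Hd Hdv]] := next_mult (x + 2) (ltnW (ltnW (ltnW Hk))).
  exists (x + d); split; first lia.
  by rewrite wb_right ?zbE -?addnA ?(addnC d) ?addnA //; lia.
case: (ltnP (cc k) (x + k)) => Hcx2.
  by exists (cc k); split; [lia | exact: wb_c].
have [d [Hd Hdv]] := next_mult x (ltnW (ltnW (ltnW Hk))).
exists (x + d); split; first lia.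
by rewrite wb_left ?zbE //; lia.
Qed.

Lemma W2 k x y : 3 < k -> x < y -> wb k x -> wb k y -> x + (k - 1) <= y.
Proof.
move=> Hk Hxy; have Hc := cc1 (ltnW (ltnW Hk)).
have Hk0 : 0 < k by lia.
have Hkc : k %| (k - 1) * k by apply: dvdn_mull.
rewrite /wb; case: (ltnP x (cc k)) => Hx; case: (ltnP y (cc k)) => Hy; rewrite ?zbE.
- by move=> H1 H2; have := dvd_gap Hk0 H1 H2 Hxy; lia.
- case: eqP => [Ey|Ny] H1 H2.
    have : x + k <= (k - 1) * k by apply: dvd_gap => //; lia.
    lia.
  have : x + k <= (k - 1) * k by apply: dvd_gap => //; lia.
  lia.
- lia.
- rewrite (gtn_eqF (leq_ltn_trans Hx Hxy)).
  case: eqP => [Ex|Nx] H1 H2.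
    have : (k - 1) * k + k <= y + 2 by apply: dvd_gap => //; lia.
    lia.
  have : x + 2 + k <= y + 2 by apply: dvd_gap => //; lia.
  lia.
Qed.

Lemma per_mod (f : nat -> bool) a p K : 0 < p ->
  (forall i, i + p < K -> f (a + i) = f (a + i + p)) ->
  forall i, i < K -> f (a + i) = f (a + i %% p).
Proof.
move=> Hp Hper; elim/ltn_ind => i IH Hi.
case: (ltnP i p) => Hip; first by rewrite modn_small.
have E : i = (i - p) + p by rewrite subnK.
rewrite E modnDr addnA -Hper; last by lia.
apply: IH; lia.
Qed.

Lemma zb_false k D r : k %| D -> 0 < r < k -> zb k (D + r) = false.
Proof. by move=> HD Hr; rewrite zb_addl // zb_small. Qed.

Lemma power_core k a p : 3 < k -> 0 < p -> a + k * p <= 2 * cc k + 1 ->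
  (forall i, i + p < k * p -> wb k (a + i) = wb k (a + i + p)) -> False.
Proof.
move=> Hk Hp Hn Hper.
have Hc := cc1 (ltnW (ltnW Hk)).
have Hkp : k <= k * p by rewrite leq_pmulr.
have Hkk : k %| (k - 1) * k by apply: dvdn_mull.
have [y0 [Hy0 Hwy0]] : exists y, a <= y < a + k /\ wb k y by apply: W3 => //; lia.
set i := y0 - a.
have Hmod := per_mod Hp Hper.
set i0 := i %% p.
have Hi0 : i0 < p by rewrite ltn_pmod.
set x0 := a + i0.
have Hj : forall j, j < k -> wb k (x0 + j * p).
  move=> j Hjk.
  have Hlt : i0 + j * p < k * p.
    have : j * p <= (k - 1) * p by rewrite leq_mul2r; apply/orP; right; lia.
    have : (k - 1) * p + p = k * p by rewrite -mulSnr; congr (_ * _); lia.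
    lia.
  rewrite /x0 -addnA Hmod // [i0 + _]addnC modnMDl modn_small //.
  have -> : a + i0 = a + i %% p by [].
  rewrite -Hmod; first by rewrite /i subnKC //; lia.
  lia.
have Hx0 : wb k x0 by have := Hj 0; rewrite mul0n addn0; apply; lia.
have Hx0p : x0 + p < a + k * p.
  have : 2 * p <= k * p by rewrite leq_mul2r; apply/orP; right; lia.
  rewrite /x0; lia.
have Hbig : 2 * ((k - 1) * k) <= k * p -> False.
  by move=> H; lia.
have S3 : forall y, 0 < y < p -> wb k (x0 + y) = false.
  move=> y /andP [Hy1 Hy2]; apply/negP => Hw.
  have H1 : x0 + (k - 1) <= x0 + y by apply: W2 => //; lia.
  have Hw1 : wb k (x0 + p) by have := Hj 1; rewrite mul1n; apply; lia.
  have H2 : x0 + y + (k - 1) <= x0 + p by apply: W2 => //; lia.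
  apply: Hbig.
  have : (2 * k - 2) * k <= p * k by rewrite leq_mul2r; apply/orP; right; lia.
  have -> : (2 * k - 2) = 2 * (k - 1) by lia.
  by rewrite -mulnA [k * p]mulnC.
have S4 : p <= k.
  rewrite leqNgt; apply/negP => Hpk.
  have [y [Hy Hwy]] : exists y, x0.+1 <= y < x0.+1 + k /\ wb k y by apply: W3 => //; lia.
  have Hy2 : 0 < y - x0 < p by lia.
  by move: (S3 _ Hy2); rewrite subnKC ?Hwy //; lia.
have S5 : k - 1 <= p.
  have Hw1 : wb k (x0 + p) by have := Hj 1; rewrite mul1n; apply; lia.
  have : x0 + (k - 1) <= x0 + p by apply: W2 => //; lia.
  lia.
have [Ep|Ep] : p = k \/ p = k - 1 by lia.
- subst p.
  case: (ltngtP x0 (cc k)) => Hxc.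
  + have Hd : k %| x0 by move: Hx0; rewrite wb_left.
    have := Hj (k - 1) ltac:(lia).
    rewrite wb_right; last by lia.
    by rewrite zb_false // ?(dvdn_add Hd) ?dvdn_mull //; lia.
  + exfalso; have : x0 + (k - 1) * k < a + k * k.
      have : (k - 1) * k + k = k * k by rewrite -mulSnr; congr (_ * _); lia.
      rewrite /x0; lia.
    lia.
  + have := Hj 1 ltac:(lia); rewrite mul1n Hxc wb_right; last by lia.
    have -> : cc k + k + 2 = ((k - 1) * k + k) + 1 by lia.
    by rewrite zb_false; [by [] | exact: (dvdn_add Hkk (dvdnn k)) | lia].
- rewrite Ep in Hj.
  case: (ltngtP x0 (cc k)) => Hxc.
  + have Hd : k %| x0 by move: Hx0; rewrite wb_left.
    have := Hj 1 ltac:(lia); rewrite mul1n.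
    case: (ltngtP (x0 + (k - 1)) (cc k)) => H1.
    * by rewrite wb_left // zb_false //; lia.
    * rewrite wb_right // -addnA.
      have -> : k - 1 + 2 = k + 1 by lia.
      by rewrite addnA zb_false; [by [] | exact: (dvdn_add Hd (dvdnn k)) | lia].
    * move=> _; have := Hj 3 ltac:(lia); rewrite wb_right; last by lia.
      have -> : x0 + 3 * (k - 1) + 2 = ((k - 1) * k + k) + (k - 1) by lia.
      by rewrite zb_false; [by [] | exact: (dvdn_add Hkk (dvdnn k)) | lia].
  + have Hd : k %| x0 + 2 by move: Hx0; rewrite wb_right.
    have := Hj 1 ltac:(lia); rewrite mul1n wb_right; last by lia.
    have -> : x0 + (k - 1) + 2 = (x0 + 2) + (k - 1) by lia.
    by rewrite zb_false //; lia.
  + have := Hj 2 ltac:(lia); rewrite wb_right; last by lia.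
    have -> : x0 + 2 * (k - 1) + 2 = ((k - 1) * k + k) + (k - 1) by rewrite Hxc; lia.
    by rewrite zb_false; [by [] | exact: (dvdn_add Hkk (dvdnn k)) | lia].
Qed.

Lemma wb_center k s m i : 3 < k -> m <= k - 1 -> s <= cc k -> cc k < s + m -> i < m ->
  wb k (s + i) = zb k (s + 1 + i).
Proof.
move=> Hk Hm Hs1 Hs2 Hi.
have Hc := cc1 (ltnW (ltnW Hk)).
have E1 : (k - 1) * k = (k - 2) * k + k by rewrite -mulSnr; congr (_ * _); lia.
case: (ltngtP (s + i) (cc k)) => Hx.
- rewrite wb_left //.
  have -> : s + i = (k - 2) * k + (k - 1 - (cc k - (s + i))) by lia.
  have -> : s + 1 + i = (k - 2) * k + (k - (cc k - (s + i))) by lia.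
  by rewrite !zb_mul !zb_small //; lia.
- rewrite wb_right //.
  have -> : s + i + 2 = (k - 1) * k + (s + i - cc k + 1) by lia.
  have -> : s + 1 + i = (k - 1) * k + (s + i - cc k) by lia.
  by rewrite !zb_mul !zb_small //; lia.
- rewrite Hx wb_c -addnA (addnC 1) addnA Hx Hc.
  by rewrite /zb -(addn0 ((k - 1) * k)) modnMDl mod0n.
Qed.

Definition ys k m s := if s + m <= cc k then s else if s <= cc k then s + 1 else s + 2.

Lemma block_ys k m s i : 3 < k -> m <= k - 1 -> i < m -> wb k (s + i) = zb k (ys k m s + i).
Proof.
move=> Hk Hm Hi; rewrite /ys.
case: ifP => H1; first by rewrite wb_left //; lia.
case: ifP => H2; first by apply: (@wb_center k s m i) => //; move/negbT: H1; lia.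
by rewrite wb_right; [rewrite addnAC | move/negbT: H2; lia].
Qed.

Definition fp k y := (k - y %% k) %% k.

Lemma zb_fp k y i : 0 < k -> i < k -> zb k (y + i) = (i == fp k y).
Proof.
move=> Hk Hi; rewrite /zb /fp -modnDml.
have Hr := ltn_pmod y Hk.
move: (y %% k) Hr => r Hr.
case: r Hr => [|r] Hr.
  by rewrite subn0 modnn add0n modn_small.
rewrite (modn_small (_ : k - r.+1 < k)); last lia.
case: (ltnP (r.+1 + i) k) => H.
  by rewrite modn_small //; apply/idP/idP => /eqP; lia.
have -> : r.+1 + i = (r.+1 + i - k) + k by lia.
rewrite modnDr modn_small; last lia.
by apply/idP/idP => /eqP H'; apply/eqP; lia.
Qed.

Lemma key_eq k m y y' : 0 < k -> m <= k -> minn (fp k y) m = minn (fp k y') m ->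
  forall i, i < m -> zb k (y + i) = zb k (y' + i).
Proof.
move=> Hk Hm E i Hi; rewrite !zb_fp //; lia.
Qed.

Lemma php (K B : nat) (f : nat -> nat) : B < K -> (forall t, t < K -> f t < B) ->
  exists t t', [/\ t < t', t' < K & f t = f t'].
Proof.
move=> HBK Hf; apply: NNPP => H.
have Hu : uniq (map f (iota 0 K)).
  rewrite map_inj_in_uniq ?iota_uniq // => x y; rewrite !mem_iota !add0n => /andP [_ Hx] /andP [_ Hy] E.
  case: (ltngtP x y) => // Hxy; exfalso; apply: H.
    by exists x, y.
  by exists y, x.
have := uniq_leq_size Hu (_ : {subset map f (iota 0 K) <= iota 0 B}).
rewrite size_map !size_iota => /(_ _) HH.
have : K <= B.
  apply: HH => z /mapP [t]; rewrite !mem_iota !add0n => /andP [_ Ht] ->.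
  by rewrite Hf.
lia.
Qed.

Lemma mod_lt2 k x : 0 < k -> x < 2 * k -> x %% k = if x < k then x else x - k.
Proof.
move=> Hk Hx; case: ltnP => H; first by rewrite modn_small.
have -> : x = (x - k) + k by lia.
by rewrite modnDr modn_small; lia.
Qed.

Lemma mulmod k x y g : x %% k = y %% k -> (x * g) %% k = (y * g) %% k.
Proof. by move=> E; rewrite -modnMml E modnMml. Qed.

Definition hh g t0 t := t * g + (if t0 < t then 2 else 0).

Lemma NT k g t0 : 3 < k -> g + 3 <= k -> 0 < t0 -> t0 + 2 <= k ->
  exists t t', [/\ t < t', t' < k, t != t0, t' != t0 &
                   hh g t0 t %% k = hh g t0 t' %% k].
Proof.
move=> Hk Hg Ht0 Ht0k.
have Hk0 : 0 < k by lia.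
pose P j := (0 < j) && (j < k) && (j * g %% k == 0).
case: (classic (exists j, P j)) => [exP | noP].
- case: (ex_minnP exP) => j /andP [/andP [Hj0 Hjk] /eqP Hjg] Hmin.
  case: (ltnP j t0) => Hjt0.
    exists 0, j; split => //; try lia.
    rewrite /hh; have -> : (t0 < 0) = false by lia.
    have -> : (t0 < j) = false by lia.
    by rewrite mul0n !addn0 mod0n Hjg.
  case: (ltnP (t0 + 1 + j) k) => Hjk2.
    exists (t0 + 1), (t0 + 1 + j); split => //; try lia.
    rewrite /hh; have -> : (t0 < t0 + 1) = true by lia.
    have -> : (t0 < t0 + 1 + j) = true by lia.
    by rewrite [in RHS]mulnDl [in RHS]addnAC -[in RHS]modnDmr Hjg addn0.
  have Hr : k %% j = 0.
    apply: contraTeq isT => /negbTE Hr0.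
    have Hrj : k %% j < j by rewrite ltn_pmod.
    have HP : P (k %% j).
      rewrite /P; apply/andP; split; first by apply/andP; split; lia.
      have Hd : k %| (k %/ j) * (j * g) + (k %% j) * g.
        by rewrite mulnA -mulnDl -divn_eq dvdn_mulr.
      rewrite -/(dvdn _ _) -(dvdn_addr _ (_ : k %| (k %/ j) * (j * g))) //.
      by apply: dvdn_mull; rewrite /dvdn Hjg.
    have := Hmin _ HP; lia.
  have Ek : k = (k %/ j) * j by rewrite {1}(divn_eq k j) Hr addn0.
  have Ek2 : k = 2 * j.
    move: Ek; case: (k %/ j) => [|[|[|q]]] Ek.
    - by move: Ek; rewrite mul0n; lia.
    - by move: Ek; rewrite mul1n; lia.
    - by [].
    - by move: Ek; rewrite !mulSn; lia.
  have Hg2 : 2 %| g.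
    have : j * 2 %| j * g by rewrite mulnC -Ek2 /dvdn Hjg.
    by rewrite dvdn_pmul2l.
  pose sg t := if t < t0 then t else t.+1.
  have Hev : forall t, 2 %| hh g t0 t %% k.
    move=> t; rewrite /dvdn (modn_dvdm _ (_ : 2 %| k)); last by rewrite Ek2 dvdn_mulr.
    rewrite /hh -/(dvdn _ _) dvdn_add ?dvdn_mull //.
    by case: ifP.
  have Hjk1 : j < k - 1 by lia.
  have Hf : forall t, t < k - 1 -> hh g t0 (sg t) %% k %/ 2 < j.
    move=> t0' _; have := ltn_pmod (hh g t0 (sg t0')) Hk0; lia.
  have [t [t' [Htt Ht'k Ef]]] := php Hjk1 Hf.
  exists (sg t), (sg t'); rewrite /sg; split.
  + by case: ifP; case: ifP; lia.
  + by case: ifP; lia.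
  + by case: ifP => H; apply/eqP; lia.
  + by case: ifP => H; apply/eqP; lia.
  + have E1 := Hev (sg t); have E2 := Hev (sg t'); rewrite /sg in E1 E2 Ef.
    move: E1 E2 Ef; rewrite /dvdn; lia.
- have Hinj : forall x y, x < y < k -> x * g %% k != y * g %% k.
    move=> x y /andP [Hxy Hyk]; apply/negP => /eqP E.
    apply: noP; exists (y - x); rewrite /P; apply/andP; split; first by apply/andP; split; lia.
    have : (y * g == x * g %[mod k]) by rewrite E.
    by rewrite eqn_mod_dvd ?leq_mul2r ?(ltnW Hxy) ?orbT // -mulnBl.
  have Hu : uniq (map (fun t => t * g %% k) (iota 0 k)).
    rewrite map_inj_in_uniq ?iota_uniq // => x y; rewrite !mem_iota !add0n => /andP [_ Hx] /andP [_ Hy] E.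
    case: (ltngtP x y) => // Hxy; exfalso.
      by have := Hinj x y; rewrite Hxy Hy E eqxx => /(_ isT).
    by have := Hinj y x; rewrite Hxy Hx E eqxx => /(_ isT).
  have Hsub : {subset map (fun t => t * g %% k) (iota 0 k) <= iota 0 k}.
    by move=> z /mapP [t _ ->]; rewrite mem_iota add0n ltn_pmod.
  have Hsz : size (iota 0 k) <= size (map (fun t => t * g %% k) (iota 0 k)).
    by rewrite size_map.
  have [_ Hm] := uniq_min_size Hu Hsub Hsz.
  have : 2 \in map (fun t => t * g %% k) (iota 0 k) by rewrite Hm mem_iota; lia.
  case/mapP => s; rewrite mem_iota add0n => /andP [_ Hsk] Hs.
    set u := (t0 + 1 + s) %% k.
    have Hhu : hh g t0 (t0 + 1) %% k = (u * g) %% k.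
      rewrite /hh; have -> : (t0 < t0 + 1) = true by lia.
      rewrite {1}Hs modnDmr -mulnDl; apply: mulmod; rewrite /u modn_mod; congr (_ %% _); lia.
    have Hu2 : u = if t0 + 1 + s < k then t0 + 1 + s else t0 + 1 + s - k.
      by rewrite /u mod_lt2 //; lia.
    case: (ltnP u t0) => Hut0.
      exists u, (t0 + 1); split; try lia.

      rewrite [RHS]Hhu /hh; have -> : (t0 < u) = false by lia.
      by rewrite addn0.
    case: (ltnP (t0 + 1) u) => Hut1.
      exists 0, (t0 + 1 + (k - u)); split; try lia.
      rewrite /hh; have -> : (t0 < 0) = false by lia.
      have -> : (t0 < t0 + 1 + (k - u)) = true by lia.
      rewrite mul0n mod0n {1}Hs modnDmr -mulnDl.
      have -> : t0 + 1 + (k - u) + s = ((t0 + 1 + s) %/ k).+1 * k.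
        have := divn_eq (t0 + 1 + s) k; rewrite -/u mulSn; have := ltn_pmod (t0 + 1 + s) Hk0.
        rewrite -/u; lia.
      by rewrite mulnAC modnMl.
    exfalso.
    have [Eu|Eu] : u = t0 \/ u = t0 + 1 by lia.
    * have Es : s = k - 1 by move: Hu2; case: ifP => _; lia.
      have : (2 + g) %% k = 0.
        rewrite {1}Hs modnDml Es -mulSnr.
        have -> : (k - 1).+1 = k by lia.
        by rewrite mulnC modnMl.
      rewrite modn_small; lia.
    * have Es : s = 0 by move: Hu2; case: ifP => _; lia.
      by move: Hs; rewrite Es mul0n mod0n.
Qed.

Lemma anti_core k a m : 3 < k -> a + k * m <= 2 * cc k + 1 ->
  exists t t', [/\ t < t', t' < k &
    forall i, i < m -> wb k (a + t * m + i) = wb k (a + t' * m + i)].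
Proof.
move=> Hk Hn.
have Hc := cc1 (ltnW (ltnW Hk)).
have Hk0 : 0 < k by lia.
case: (posnP m) => [->|Hm0]; first by exists 0, 1; split => //; lia.
case: (leqP m (k - 2)) => Hmk.
  have HB : m.+1 < k by lia.
  have Hf : forall t, t < k -> minn (fp k (ys k m (a + t * m))) m < m.+1.
    by move=> t _; lia.
  have [t [t' [Htt Ht'k Ef]]] := php HB Hf.
  exists t, t'; split => // i Hi.
  rewrite (block_ys (a + t * m) Hk (_ : m <= k - 1) Hi) ?(block_ys (a + t' * m) Hk (_ : m <= k - 1) Hi); try lia.
  by apply: (key_eq Hk0 _ Ef); lia.
set t0 := (cc k - a) %/ m.
have Hlo : t0 * m <= cc k - a by apply: leq_divM.
have Hhi : cc k - a < t0.+1 * m by apply: ltn_ceil.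
have Ekm : k * m = (k - 1) * m + m by rewrite -mulSnr; congr (_ * _); lia.
case: (leqP m (k - 1)) => Hmk2.
  have Em : m = k - 1 by lia.
  have Ha : a <= cc k.
    move: Hn; rewrite Em mulnC; lia.
  have Ht0k : t0 < k.
    rewrite /t0 ltn_divLR //; move: Hn; rewrite Em mulnC; lia.
  have Hsh : forall y i, zb k (y + i) = zb k (y + k + i).
    by move=> y i; apply: zb_cong; rewrite modnDr.
  case Et0 : t0 => [|t1].
    rewrite Et0 in Hhi.
    exists 0, 1; split => //; first lia.
    move=> i Hi; rewrite !(block_ys _ Hk (_ : m <= k - 1) Hi); try lia.
    rewrite /ys mul0n mul1n addn0.
    have F1 : (a + m <= cc k) = false by lia.
    have T2 : (a <= cc k) = true by lia.
    have F3 : (a + m + m <= cc k) = false by lia.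
    rewrite ?F1 ?T2 ?F3.
    by rewrite (Hsh (a + 1)); congr (zb k (_ + i)); lia.
  rewrite Et0 in Hlo Hhi.
  exists t1, t1.+1; split => //; first lia.
  move=> i Hi; rewrite !(block_ys _ Hk (_ : m <= k - 1) Hi); try lia.
  rewrite /ys mulSnr.
  have T1 : (a + t1 * m + m <= cc k) = true by lia.
  have F2 : (a + (t1 * m + m) + m <= cc k) = false by lia.
  have T3 : (a + (t1 * m + m) <= cc k) = true by lia.
  rewrite ?T1 ?F2 ?T3.
  by rewrite (Hsh (a + t1 * m)); congr (zb k (_ + i)); lia.
have Hkm : (k - 1) * k <= (k - 1) * m by rewrite leq_mul2l; apply/orP; right; lia.
have Hm2 : m + 3 <= 2 * k.
  have : k * m < k * (2 * k - 2).
    have -> : k * (2 * k - 2) = 2 * ((k - 1) * k).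
      by rewrite (_ : 2 * k - 2 = 2 * (k - 1)); [rewrite mulnCA (mulnC k (k - 1)) | lia].
    lia.
  rewrite ltn_mul2l => /andP [_ H]; lia.
set g := m - k.
have Ha : a + k <= cc k by lia.
have Ht0 : 0 < t0.
  rewrite lt0n; apply/eqP => E; rewrite E in Hhi; lia.
have Ht0k : t0 + 2 <= k.
  rewrite leqNgt; apply/negP => H.
  have : (k - 1) * m <= t0 * m by rewrite leq_mul2r; apply/orP; right; lia.
  lia.
have Hk3 : 3 < k by []. have Hg3 : g + 3 <= k by rewrite /g; lia.
have [t [t' [Htt Ht'k Hn1 Hn2 Eh]]] := NT Hk3 Hg3 Ht0 Ht0k.
exists t, t'; split => // i Hi.
have Hblk : forall u, u < k -> u != t0 -> forall i, i < m ->
    wb k (a + u * m + i) = zb k (u * k + (a + hh g t0 u) + i).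
  move=> u Hu Hu0 j Hj.
  have Em : u * m = u * k + u * g by rewrite -mulnDr /g subnKC //; lia.
  case: (ltngtP u t0) => Hut.
  - rewrite wb_left; last first.
      have : u.+1 * m <= t0 * m by rewrite leq_mul2r; apply/orP; right.
      rewrite mulSn; lia.
    rewrite /hh; have -> : (t0 < u) = false by lia.
    by congr (zb k _); lia.
  - rewrite wb_right; last first.
      have : t0.+1 * m <= u * m by rewrite leq_mul2r; apply/orP; right.
      lia.
    rewrite /hh; have -> : (t0 < u) = true by lia.
    by congr (zb k _); lia.
  - by move: Hu0; rewrite Hut eqxx.
rewrite !Hblk //.
apply: zb_cong; rewrite !modnMDl.
by rewrite -modnDmr Eh modnDmr.
  by apply: ltn_trans Ht'k.
Qed.

Lemma lower_word (T : eqType) (x0 x1 : T) k : x0 != x1 -> 3 < k ->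
  forall f, infix f (mkseq (fun x => if wb k x then x1 else x0) (2 * cc k + 1)) ->
  ~ (is_kpower k f \/ is_kantipower k f).
Proof.
move=> Hx Hk f Hf.
set w := mkseq _ _ in Hf.
have Hlet : forall b b', (if b then x1 else x0) = (if b' then x1 else x0) -> b = b'.
  by move=> [] [] // E; move: Hx; rewrite E eqxx.
have Hw : forall x, x < 2 * cc k + 1 -> nth x0 w x = if wb k x then x1 else x0.
  by move=> x Hxn; rewrite nth_mkseq.
have [a [Ha Hnth]] := infix_pos x0 Hf.
rewrite size_mkseq in Ha.
case.
- move=> [u [Hu Ef]].
  have Hp : 0 < size u by rewrite lt0n size_eq0.
  have Hsf : size f = k * size u by rewrite Ef size_flatten_nseq.
  apply: (@power_core k a (size u) Hk Hp); first by rewrite -Hsf.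
  move=> i Hi; apply: Hlet.
  rewrite -!Hw; try lia.
  rewrite -addnA -!Hnth; try lia.
  rewrite Ef !nth_flatten_nseq; try lia.
  by rewrite modnDr.
- move=> [ws [Hsz Ef [m Hm] Hu]].
  have Hsf : size f = k * m by rewrite Ef (size_flatten_blocks Hm) Hsz.
  have [t [t' [Htt Ht'k Hb]]] := @anti_core k a m Hk ltac:(by rewrite -Hsf).
  have Hnt : nth [::] ws t = nth [::] ws t'.
    apply: (@eq_from_nth _ x0).
      by rewrite !Hm ?mem_nth ?Hsz //; lia.
    move=> i; rewrite Hm ?mem_nth ?Hsz; try lia.
    move=> Hi.
    have H1 : t * m + i < k * m.
      have : t.+1 * m <= k * m by rewrite leq_mul2r; apply/orP; right; lia.
      rewrite mulSn; lia.
    have H2 : t' * m + i < k * m.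
      have : t'.+1 * m <= k * m by rewrite leq_mul2r; apply/orP; right; lia.
      rewrite mulSn; lia.
    rewrite -!(nth_flatten_blocks x0 Hm) ?Hsz //; try lia.
    rewrite -Ef !Hnth ?Hsf // !Hw; try lia.
    by rewrite !addnA Hb.
  have := nth_uniq [::] (_ : t < size ws) (_ : t' < size ws) Hu.
  rewrite Hnt eqxx Hsz => /(_ ltac:(lia) ltac:(lia)) /esym /eqP; lia.
Qed.

Lemma min_exists (P : nat -> Prop) U : P U ->
  exists N, [/\ N <= U, P N & forall M, M < N -> ~ P M].
Proof.
elim/ltn_ind: U => U IH HU.
case: (classic (exists M, M < U /\ P M)) => [[M [HM PM]] | H].
  have [N [HN PN Hmin]] := IH M HM PM.
  exists N; split => //; lia.
exists U; split => // M HM PM; apply: H; by exists M.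
Qed.

Theorem theorem5p1 (alpha k : nat) : 2 <= alpha -> 3 < k ->
  exists N, is_N_alpha_kk alpha k N /\
    2 * k ^ 2 - 2 * k <= N <= (k ^ 3 - k ^ 2 + k) * 'C(k, 2).
Proof.
move=> Ha Hk.
set U := (k ^ 3 - k ^ 2 + k) * 'C(k, 2).
have HU0 : 0 < U.
  rewrite /U muln_gt0 bin_gt0; apply/andP; split; last lia.
  have : k ^ 2 <= k ^ 3 by rewrite leq_exp2l; lia.
  lia.
have HforceU : forces_power_or_antipower alpha k U.
  by move=> w Hw; apply: upper_gen.
have Hnot : forall M, M <= 2 * cc k + 1 -> ~ forces_power_or_antipower alpha k M.
  move=> M HM Hf.
  have H0 : 0 < alpha by lia.
  have H1 : 1 < alpha by lia.
  pose x0 : 'I_alpha := Ordinal H0.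
  pose x1 : 'I_alpha := Ordinal H1.
  have Hx : x0 != x1 by [].
  set wl := mkseq (fun x => if wb k x then x1 else x0) (2 * cc k + 1).
  have Hsz : size (take M wl) = M by rewrite size_takel // size_mkseq.
  have [f [Hinf Hpa]] := Hf _ Hsz.
  have Hinf' : infix f wl.
    apply: infix_trans Hinf _.
    by have := infix_take_drop wl 0 M; rewrite drop0.
  exact: (lower_word Hx Hk Hinf' Hpa).
have [N [HNU [HN0 HNf] Hmin]] := @min_exists (fun N => 0 < N /\ forces_power_or_antipower alpha k N) U (conj HU0 HforceU).
exists N; split.
  split => //; split => // M HM0 HMN HMf.
  exact: (Hmin M HMN (conj HM0 HMf)).
apply/andP; split => //.
rewrite leqNgt; apply/negP => HN.
apply: (Hnot N) => //.
have Hc := cc1 (ltnW (ltnW Hk)).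
have E1 : k ^ 2 = k * k by rewrite expnS expn1.
have E2 : (k - 1) * k = k * k - k by rewrite mulnBl mul1n.
lia.
Qed.
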